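(* Let $m,n\ge 2$ and $\mathcal{A}=(a_{i_1j_1i_2j_2})\in NBQ(m,n)$. Then $$\rho^*=\lambda_{\max}(\mathcal{A})=\rho_M(\mathcal{A}),$$ and the supremum defining $\rho^*$ is attained.
   Context: A biquadratic tensor is $\mathcal{A}=(a_{i_1j_1i_2j_2})\in\mathbb{R}^{m\times n\times m\times n}$ (indices $i_1,i_2\in[m]=\{1,\dots,m\}$, $j_1,j_2\in[n]$); $NBQ(m,n)$ denotes the set of entrywise nonnegative ones. M-eigenvalues: a real number $\lambda$ is an M-eigenvalue of $\mathcal{A}$ if there are $\mathbf{x}\in\mathbb{R}^m$, $\mathbf{y}\in\mathbb{R}^n$ with $\mathbf{x}^\top\mathbf{x}=\mathbf{y}^\top\mathbf{y}=1$, $\mathbf{g}=\lambda\mathbf{x}$ and $\mathbf{h}=\lambda\mathbf{y}$, where $\mathbf{g}\in\mathbb{R}^m,\mathbf{h}\in\mathbb{R}^n$ are given by $g_i=\tfrac12\Big(\sum_{i_1=1}^m\sum_{j_1,j_2=1}^n a_{i_1j_1ij_2}x_{i_1}y_{j_1}y_{j_2}+\sum_{i_2=1}^m\sum_{j_1,j_2=1}^n a_{ij_1i_2j_2}y_{j_1}x_{i_2}y_{j_2}\Big)$, $h_j=\tfrac12\Big(\sum_{i_1,i_2=1}^m\sum_{j_1=1}^n a_{i_1j_1i_2j}x_{i_1}y_{j_1}x_{i_2}+\sum_{i_1,i_2=1}^m\sum_{j_2=1}^n a_{i_1ji_2j_2}x_{i_1}x_{i_2}y_{j_2}\Big)$.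 $\lambda_{\max}(\mathcal{A})$ is the largest M-eigenvalue, equivalently $\max\{\sum a_{i_1j_1i_2j_2}x_{i_1}y_{j_1}x_{i_2}y_{j_2}:\mathbf{x}^\top\mathbf{x}=\mathbf{y}^\top\mathbf{y}=1\}$, and $\rho_M(\mathcal{A})$ is the largest absolute value of an M-eigenvalue of $\mathcal{A}$. Let $S_+^{m-1}=\{\mathbf{x}\in\mathbb{R}^m_+:\sum_i x_i^2=1\}$. For nonzero $\mathbf{x}\in\mathbb{R}^m_+$, $\mathbf{y}\in\mathbb{R}^n_+$, with $\mathbf{g},\mathbf{h}$ defined by the formulas above (as functions of $\mathbf{x},\mathbf{y}$), set $v(\mathbf{x},\mathbf{y})=\min\big\{\{g_i/x_i: x_i>0\}\cup\{h_j/y_j: y_j>0\}\big\}$, and $\rho^*=\sup_{\mathbf{x}\in S_+^{m-1},\,\mathbf{y}\in S_+^{n-1}} v(\mathbf{x},\mathbf{y})$. *)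

(* Defs.v *)
From HB Require Import structures.
From mathcomp Require Import all_boot all_order all_algebra.
From mathcomp Require Import all_classical all_reals.
Set Implicit Arguments. Unset Strict Implicit. Unset Printing Implicit Defensive.
Import Order.TTheory GRing.Theory Num.Theory.
Local Open Scope classical_set_scope.
Local Open Scope ring_scope.

Definition biquad (R : realType) (m n : nat) :=
  'I_m -> 'I_n -> 'I_m -> 'I_n -> R.

Section BQ.
Variables (R : realType) (m n : nat).

Definition nonneg_bq (A : biquad R m n) : Prop :=
  forall i1 j1 i2 j2, 0 <= A i1 j1 i2 j2.

Definition gvec (A : biquad R m n) (x : 'I_m -> R) (y : 'I_n -> R) (i : 'I_m) : R :=
  2^-1 * ((\sum_(i1 < m) \sum_(j1 < n) \sum_(j2 < n) A i1 j1 i j2 * x i1 * y j1 * y j2)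
        + (\sum_(i2 < m) \sum_(j1 < n) \sum_(j2 < n) A i j1 i2 j2 * y j1 * x i2 * y j2)).

Definition hvec (A : biquad R m n) (x : 'I_m -> R) (y : 'I_n -> R) (j : 'I_n) : R :=
  2^-1 * ((\sum_(i1 < m) \sum_(i2 < m) \sum_(j1 < n) A i1 j1 i2 j * x i1 * y j1 * x i2)
        + (\sum_(i1 < m) \sum_(i2 < m) \sum_(j2 < n) A i1 j i2 j2 * x i1 * x i2 * y j2)).

Definition is_M_eigenvalue (A : biquad R m n) (lam : R) : Prop :=
  exists (x : 'I_m -> R) (y : 'I_n -> R),
    \sum_(i < m) x i ^+ 2 = 1 /\ \sum_(j < n) y j ^+ 2 = 1 /\
    (forall i, gvec A x y i = lam * x i) /\
    (forall j, hvec A x y j = lam * y j).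

Definition lambda_max (A : biquad R m n) : R := sup (is_M_eigenvalue A).

Definition rho_M (A : biquad R m n) : R :=
  sup [set `|lam| | lam in is_M_eigenvalue A].

Definition Splus (k : nat) (x : 'I_k -> R) : Prop :=
  (forall i, 0 <= x i) /\ \sum_(i < k) x i ^+ 2 = 1.

Definition vfun (A : biquad R m n) (x : 'I_m -> R) (y : 'I_n -> R) : R :=
  inf [set r | (exists i, 0 < x i /\ r = gvec A x y i / x i) \/
               (exists j, 0 < y j /\ r = hvec A x y j / y j)].

Definition rho_star (A : biquad R m n) : R :=
  sup [set r | exists (x : 'I_m -> R) (y : 'I_n -> R),
              Splus x /\ Splus y /\ r = vfun A x y].

End BQ.

(* Main.v *)
Require Import Defs.
From HB Require Import structures.
From mathcomp Require Import all_boot all_order all_algebra.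
From mathcomp Require Import all_classical all_reals all_analysis.
From mathcomp Require Import ring lra.
Set Implicit Arguments. Unset Strict Implicit. Unset Printing Implicit Defensive.
Import Order.TTheory GRing.Theory Num.Theory.
Import numFieldTopology.Exports numFieldNormedType.Exports.
Local Open Scope classical_set_scope.
Local Open Scope ring_scope.


Section Alg.
Variables (R : realType) (m n : nat) (A : biquad R m n).

Definition BB (x x' : 'I_m -> R) (y y' : 'I_n -> R) : R :=
  \sum_(i1 < m) \sum_(j1 < n) \sum_(i2 < m) \sum_(j2 < n)
     A i1 j1 i2 j2 * x i1 * y j1 * x' i2 * y' j2.

Definition fq x y := BB x x y y.
Definition nrm2 k (x : 'I_k -> R) := \sum_(i < k) x i ^+ 2.
Definition ev k (i : 'I_k) : 'I_k -> R := fun p => (p == i)%:R.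

Lemma sum_delta k (i : 'I_k) (G : 'I_k -> R) :
  \sum_(p < k) ev i p * G p = G i.
Proof.
rewrite (bigD1 i) //= /ev eqxx mul1r big1 ?addr0 // => p /negbTE ->.
by rewrite mul0r.
Qed.

Lemma BB_lin1 c u v x' y y' :
  BB (fun p => c * u p + v p) x' y y' = c * BB u x' y y' + BB v x' y y'.
Proof.
rewrite /BB mulr_sumr -big_split; apply: eq_bigr => ? _.
do 3 (rewrite mulr_sumr -big_split; apply: eq_bigr => ? _).
rewrite /=; ring.
Qed.

Lemma BB_lin2 c u v x y y' :
  BB x (fun p => c * u p + v p) y y' = c * BB x u y y' + BB x v y y'.
Proof.
rewrite /BB mulr_sumr -big_split; apply: eq_bigr => ? _.
do 3 (rewrite mulr_sumr -big_split; apply: eq_bigr => ? _).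
rewrite /=; ring.
Qed.

Lemma BB_lin3 c u v x x' y' :
  BB x x' (fun p => c * u p + v p) y' = c * BB x x' u y' + BB x x' v y'.
Proof.
rewrite /BB mulr_sumr -big_split; apply: eq_bigr => ? _.
do 3 (rewrite mulr_sumr -big_split; apply: eq_bigr => ? _).
rewrite /=; ring.
Qed.

Lemma BB_lin4 c u v x x' y :
  BB x x' y (fun p => c * u p + v p) = c * BB x x' y u + BB x x' y v.
Proof.
rewrite /BB mulr_sumr -big_split; apply: eq_bigr => ? _.
do 3 (rewrite mulr_sumr -big_split; apply: eq_bigr => ? _).
rewrite /=; ring.
Qed.

Lemma fq_scale c d x y :
  fq (fun p => c * x p) (fun q => d * y q) = c ^+ 2 * d ^+ 2 * fq x y.
Proof.
rewrite /fq /BB mulr_sumr; apply: eq_bigr => ? _.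
do 3 (rewrite mulr_sumr; apply: eq_bigr => ? _).
rewrite /=; ring.
Qed.

Lemma gvec_BB x y i :
  gvec A x y i = 2^-1 * (BB x (ev i) y y + BB (ev i) x y y).
Proof.
rewrite /gvec /BB; congr (_ * (_ + _)).
  apply: eq_bigr => i1 _; apply: eq_bigr => j1 _.
  rewrite -(sum_delta i (fun i2 => \sum_(j2 < n) A i1 j1 i2 j2 * x i1 * y j1 * y j2)).
  apply: eq_bigr => i2 _; rewrite mulr_sumr; apply: eq_bigr => j2 _; ring.
rewrite -(sum_delta i (fun i1 => \sum_(i2 < m) \sum_(j1 < n) \sum_(j2 < n)
       A i1 j1 i2 j2 * y j1 * x i2 * y j2)).
apply: eq_bigr => i1 _; rewrite mulr_sumr exchange_big; apply: eq_bigr => j1 _.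
rewrite mulr_sumr; apply: eq_bigr => i2 _.
rewrite mulr_sumr; apply: eq_bigr => j2 _; rewrite /ev; ring.
Qed.

Lemma hvec_BB x y j :
  hvec A x y j = 2^-1 * (BB x x y (ev j) + BB x x (ev j) y).
Proof.
rewrite /hvec /BB; congr (_ * (_ + _)).
  apply: eq_bigr => i1 _; rewrite exchange_big; apply: eq_bigr => j1 _.
  apply: eq_bigr => i2 _.
  rewrite -(sum_delta j (fun j2 => A i1 j1 i2 j2 * x i1 * y j1 * x i2)).
  apply: eq_bigr => j2 _; rewrite /ev; ring.
apply: eq_bigr => i1 _.
rewrite -(sum_delta j (fun j1 => \sum_(i2 < m) \sum_(j2 < n)
       A i1 j1 i2 j2 * x i1 * x i2 * y j2)).
apply: eq_bigr => j1 _; rewrite mulr_sumr; apply: eq_bigr => i2 _.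
rewrite mulr_sumr; apply: eq_bigr => j2 _; rewrite /ev; ring.
Qed.


Lemma BB_sum1 u x' y y' : \sum_(i < m) u i * BB (ev i) x' y y' = BB u x' y y'.
Proof.
apply: eq_bigr => i _.
have -> : BB (ev i) x' y y' = \sum_(j1 < n) \sum_(i2 < m) \sum_(j2 < n)
       A i j1 i2 j2 * y j1 * x' i2 * y' j2.
  rewrite /BB -(sum_delta i (fun i1 => \sum_(j1 < n) \sum_(i2 < m) \sum_(j2 < n)
       A i1 j1 i2 j2 * y j1 * x' i2 * y' j2)).
  apply: eq_bigr => i1 _; rewrite mulr_sumr; apply: eq_bigr => j1 _.
  rewrite mulr_sumr; apply: eq_bigr => i2 _.
  rewrite mulr_sumr; apply: eq_bigr => j2 _; rewrite /ev; ring.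
rewrite mulr_sumr; apply: eq_bigr => j1 _.
rewrite mulr_sumr; apply: eq_bigr => i2 _.
rewrite mulr_sumr; apply: eq_bigr => j2 _; ring.
Qed.

Lemma BB_sum2 u x y y' : \sum_(i < m) u i * BB x (ev i) y y' = BB x u y y'.
Proof.
have E i : BB x (ev i) y y' = \sum_(i1 < m) \sum_(j1 < n) \sum_(j2 < n)
       A i1 j1 i j2 * x i1 * y j1 * y' j2.
  rewrite /BB; apply: eq_bigr => i1 _; apply: eq_bigr => j1 _.
  rewrite -(sum_delta i (fun i2 => \sum_(j2 < n) A i1 j1 i2 j2 * x i1 * y j1 * y' j2)).
  apply: eq_bigr => i2 _; rewrite mulr_sumr; apply: eq_bigr => j2 _; rewrite /ev; ring.
under eq_bigr do rewrite E mulr_sumr.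
rewrite exchange_big; apply: eq_bigr => i1 _.
under eq_bigr do rewrite mulr_sumr.
rewrite exchange_big; apply: eq_bigr => j1 _.
apply: eq_bigr => i2 _; rewrite mulr_sumr; apply: eq_bigr => j2 _; ring.
Qed.

Lemma BB_sum3 u x x' y' : \sum_(j < n) u j * BB x x' (ev j) y' = BB x x' u y'.
Proof.
have E j : BB x x' (ev j) y' = \sum_(i1 < m) \sum_(i2 < m) \sum_(j2 < n)
       A i1 j i2 j2 * x i1 * x' i2 * y' j2.
  rewrite /BB; apply: eq_bigr => i1 _.
  rewrite -(sum_delta j (fun j1 => \sum_(i2 < m) \sum_(j2 < n)
       A i1 j1 i2 j2 * x i1 * x' i2 * y' j2)).
  apply: eq_bigr => j1 _; rewrite mulr_sumr; apply: eq_bigr => i2 _.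
  rewrite mulr_sumr; apply: eq_bigr => j2 _; rewrite /ev; ring.
under eq_bigr do rewrite E mulr_sumr.
rewrite exchange_big; apply: eq_bigr => i1 _.
apply: eq_bigr => j1 _; rewrite mulr_sumr; apply: eq_bigr => i2 _.
rewrite mulr_sumr; apply: eq_bigr => j2 _; ring.
Qed.

Lemma BB_sum4 u x x' y : \sum_(j < n) u j * BB x x' y (ev j) = BB x x' y u.
Proof.
have E j : BB x x' y (ev j) = \sum_(i1 < m) \sum_(j1 < n) \sum_(i2 < m)
       A i1 j1 i2 j * x i1 * y j1 * x' i2.
  rewrite /BB; apply: eq_bigr => i1 _; apply: eq_bigr => j1 _; apply: eq_bigr => i2 _.
  rewrite -(sum_delta j (fun j2 => A i1 j1 i2 j2 * x i1 * y j1 * x' i2)).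
  apply: eq_bigr => j2 _; rewrite /ev; ring.
under eq_bigr do rewrite E mulr_sumr.
rewrite exchange_big; apply: eq_bigr => i1 _.
under eq_bigr do rewrite mulr_sumr.
rewrite exchange_big; apply: eq_bigr => j1 _.
under eq_bigr do rewrite mulr_sumr.
rewrite exchange_big; apply: eq_bigr => i2 _.
apply: eq_bigr => j2 _; ring.
Qed.

Lemma euler_g x y : \sum_(i < m) x i * gvec A x y i = fq x y.
Proof.
have -> : \sum_(i < m) x i * gvec A x y i =
   2^-1 * (\sum_(i < m) x i * BB x (ev i) y y + \sum_(i < m) x i * BB (ev i) x y y).
  rewrite -big_split mulr_sumr; apply: eq_bigr => i _; rewrite gvec_BB /=; ring.
rewrite BB_sum1 BB_sum2 /fq; by field.
Qed.

Lemma euler_h x y : \sum_(j < n) y j * hvec A x y j = fq x y.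
Proof.
have -> : \sum_(j < n) y j * hvec A x y j =
   2^-1 * (\sum_(j < n) y j * BB x x y (ev j) + \sum_(j < n) y j * BB x x (ev j) y).
  rewrite -big_split mulr_sumr; apply: eq_bigr => j _; rewrite hvec_BB /=; ring.
rewrite BB_sum3 BB_sum4 /fq; by field.
Qed.

Lemma nrm2_pert k (i : 'I_k) t x :
  nrm2 (fun p => t * ev i p + x p) = t ^+ 2 + 2 * t * x i + nrm2 x.
Proof.
have -> : nrm2 (fun p => t * ev i p + x p) =
    \sum_(p < k) ev i p * (t ^+ 2 + 2 * t * x p) + nrm2 x.
  rewrite /nrm2 -big_split; apply: eq_bigr => p _ /=.
  rewrite /ev; case: (p == i) => /=; ring.
by rewrite (sum_delta i (fun p => t ^+ 2 + 2 * t * x p)).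
Qed.

Lemma quad0 (a b : R) : (forall t, a * t + b * t ^+ 2 <= 0) -> a = 0.
Proof.
move=> H; apply/eqP; apply/negPn/negP => a0.
have b1 : 0 < `|b| + 1 by rewrite ltr_wpDl.
have := H (a / (`|b| + 1)).
have -> : a * (a / (`|b| + 1)) + b * (a / (`|b| + 1)) ^+ 2 =
   a ^+ 2 / (`|b| + 1) ^+ 2 * (`|b| + b + 1).
  by field; rewrite gt_eqF.
apply/negP; rewrite -ltNge; apply: mulr_gt0.
    apply: divr_gt0; last by rewrite exprn_gt0.
  by rewrite lt_def sqrf_eq0 a0 sqr_ge0.
have : -b <= `|b| by rewrite ler_normr lexx orbT.
lra.
Qed.


Lemma fq_pert1 t i x y : fq (fun p => t * ev i p + x p) y =
  t ^+ 2 * BB (ev i) (ev i) y y + t * (BB (ev i) x y y + BB x (ev i) y y) + fq x y.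
Proof. rewrite /fq BB_lin1 !BB_lin2; ring. Qed.

Lemma fq_pert2 t j x y : fq x (fun q => t * ev j q + y q) =
  t ^+ 2 * BB x x (ev j) (ev j) + t * (BB x x (ev j) y + BB x x y (ev j)) + fq x y.
Proof. rewrite /fq BB_lin3 !BB_lin4; ring. Qed.

Lemma stat_x lam x0 y0 :
  (forall x y, fq x y <= lam * nrm2 x * nrm2 y) ->
  nrm2 x0 = 1 -> nrm2 y0 = 1 -> fq x0 y0 = lam ->
  forall i, gvec A x0 y0 i = lam * x0 i.
Proof.
move=> Hmax nx ny hl i.
set S := BB (ev i) x0 y0 y0 + BB x0 (ev i) y0 y0.
have a0 : S - 2 * lam * x0 i = 0.
  apply: (@quad0 _ (BB (ev i) (ev i) y0 y0 - lam)) => t.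
  have H := Hmax (fun p => t * ev i p + x0 p) y0.
  rewrite fq_pert1 nrm2_pert nx ny hl in H.
  have -> : (S - 2 * lam * x0 i) * t + (BB (ev i) (ev i) y0 y0 - lam) * t ^+ 2 =
    (t ^+ 2 * BB (ev i) (ev i) y0 y0 + t * S + lam) -
      lam * (t ^+ 2 + 2 * t * x0 i + 1) * 1 by rewrite /S; ring.
  by rewrite subr_le0.
have hS : S = 2 * lam * x0 i by apply/eqP; rewrite -subr_eq0 a0.
rewrite gvec_BB addrC -/S hS; by field.
Qed.

Lemma stat_y lam x0 y0 :
  (forall x y, fq x y <= lam * nrm2 x * nrm2 y) ->
  nrm2 x0 = 1 -> nrm2 y0 = 1 -> fq x0 y0 = lam ->
  forall j, hvec A x0 y0 j = lam * y0 j.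
Proof.
move=> Hmax nx ny hl j.
set S := BB x0 x0 (ev j) y0 + BB x0 x0 y0 (ev j).
have a0 : S - 2 * lam * y0 j = 0.
  apply: (@quad0 _ (BB x0 x0 (ev j) (ev j) - lam)) => t.
  have H := Hmax x0 (fun q => t * ev j q + y0 q).
  rewrite fq_pert2 nrm2_pert nx ny hl in H.
  have -> : (S - 2 * lam * y0 j) * t + (BB x0 x0 (ev j) (ev j) - lam) * t ^+ 2 =
    (t ^+ 2 * BB x0 x0 (ev j) (ev j) + t * S + lam) -
      lam * 1 * (t ^+ 2 + 2 * t * y0 j + 1) by rewrite /S; ring.
  by rewrite subr_le0.
have hS : S = 2 * lam * y0 j by apply/eqP; rewrite -subr_eq0 a0.
rewrite hvec_BB addrC -/S hS; by field.
Qed.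

Definition absf k (x : 'I_k -> R) := fun p => `|x p|.

Lemma fq_abs x y : nonneg_bq A -> `|fq x y| <= fq (absf x) (absf y).
Proof.
move=> nA; rewrite /fq /BB.
apply: le_trans (ler_norm_sum _ _ _) _; apply: ler_sum => i1 _.
apply: le_trans (ler_norm_sum _ _ _) _; apply: ler_sum => j1 _.
apply: le_trans (ler_norm_sum _ _ _) _; apply: ler_sum => i2 _.
apply: le_trans (ler_norm_sum _ _ _) _; apply: ler_sum => j2 _.
by rewrite /absf !normrM (ger0_norm (nA _ _ _ _)).
Qed.

Lemma nrm2_abs k (x : 'I_k -> R) : nrm2 (absf x) = nrm2 x.
Proof. by apply: eq_bigr => p _; rewrite /absf real_normK // num_real. Qed.

Lemma nrm2_ge0 k (x : 'I_k -> R) : 0 <= nrm2 x.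
Proof. by apply: sumr_ge0 => p _; rewrite sqr_ge0. Qed.

Lemma nrm2_scale k c (x : 'I_k -> R) : nrm2 (fun p => c * x p) = c ^+ 2 * nrm2 x.
Proof. by rewrite /nrm2 mulr_sumr; apply: eq_bigr => p _; rewrite exprMn. Qed.

Lemma nrm2_0 k (x : 'I_k -> R) : nrm2 x = 0 -> forall p, x p = 0.
Proof.
move=> h p.
have := @psumr_eq0P _ _ predT (fun p => x p ^+ 2) (fun _ _ => sqr_ge0 _) h p isT.
by move/eqP; rewrite sqrf_eq0 => /eqP.
Qed.

Lemma fq0x x y : (forall p, x p = 0) -> fq x y = 0.
Proof.
move=> h; rewrite /fq /BB big1 // => i1 _; rewrite big1 // => j1 _.
rewrite big1 // => i2 _; rewrite big1 // => j2 _; rewrite h; ring.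
Qed.

Lemma fq0y x y : (forall p, y p = 0) -> fq x y = 0.
Proof.
move=> h; rewrite /fq /BB big1 // => i1 _; rewrite big1 // => j1 _.
rewrite big1 // => i2 _; rewrite big1 // => j2 _; rewrite h; ring.
Qed.

Lemma homog lam :
  (forall x y, nrm2 x = 1 -> nrm2 y = 1 -> fq x y <= lam) ->
  forall x y, fq x y <= lam * nrm2 x * nrm2 y.
Proof.
move=> H x y.
have [hx|hx] := eqVneq (nrm2 x) 0.
  by rewrite fq0x ?hx ?mulr0 ?mul0r //; apply: nrm2_0.
have [hy|hy] := eqVneq (nrm2 y) 0.
  by rewrite fq0y ?hy ?mulr0 ?mul0r //; apply: nrm2_0.
have gx : 0 < nrm2 x by rewrite lt_def hx nrm2_ge0.
have gy : 0 < nrm2 y by rewrite lt_def hy nrm2_ge0.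
set Nx := Num.sqrt (nrm2 x); set Ny := Num.sqrt (nrm2 y).
have Nx2 : Nx ^+ 2 = nrm2 x by rewrite sqr_sqrtr // ltW.
have Ny2 : Ny ^+ 2 = nrm2 y by rewrite sqr_sqrtr // ltW.
have Nx0 : Nx != 0 by rewrite gt_eqF // sqrtr_gt0.
have Ny0 : Ny != 0 by rewrite gt_eqF // sqrtr_gt0.
have := H (fun p => Nx^-1 * x p) (fun q => Ny^-1 * y q).
rewrite !nrm2_scale fq_scale -Nx2 -Ny2 !exprVn !mulVf ?expf_neq0 // => /(_ erefl erefl).
move=> h.
have -> : fq x y = Nx ^+ 2 * Ny ^+ 2 * (Nx ^-2 * Ny ^-2 * fq x y).
  by field; rewrite Nx0 Ny0.
have -> : lam * Nx ^+ 2 * Ny ^+ 2 = Nx ^+ 2 * Ny ^+ 2 * lam by ring.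
apply: ler_wpM2l; [exact: mulr_ge0 (sqr_ge0 _) (sqr_ge0 _) | exact: h].
Qed.

End Alg.


Section Topo.
Variable R : realType.

Lemma cont_sum (T : topologicalType) k (G : 'I_k -> T -> R) :
  (forall i, continuous (G i)) -> continuous (fun v => \sum_(i < k) G i v).
Proof.
move=> h.
have E : forall s, continuous (fun v => \sum_(i <- s) G i v).
  elim => [|a s IH].
    under eq_fun do rewrite big_nil. exact: cst_continuous.
  under eq_fun do rewrite big_cons.
  by move=> v; apply: continuousD; [apply: h | apply: IH].
exact: E.
Qed.

Lemma cont_mul (T : topologicalType) (f g : T -> R) :
  continuous f -> continuous g -> continuous (fun v => f v * g v).
Proof. by move=> hf hg v; exact: (continuousM (hf v) (hg v)). Qed.


Variables (m n : nat) (A : biquad R m n).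

Definition xof (v : 'rV[R]_(m + n)) : 'I_m -> R := fun i => v ord0 (lshift n i).
Definition yof (v : 'rV[R]_(m + n)) : 'I_n -> R := fun j => v ord0 (rshift m j).
Definition mkv (x : 'I_m -> R) (y : 'I_n -> R) : 'rV[R]_(m + n) :=
  row_mx (\row_i x i) (\row_j y j).

Lemma xof_mkv x y : xof (mkv x y) = x.
Proof. by apply/funext => i; rewrite /xof /mkv row_mxEl mxE. Qed.
Lemma yof_mkv x y : yof (mkv x y) = y.
Proof. by apply/funext => i; rewrite /yof /mkv row_mxEr mxE. Qed.

Lemma coord_cont k (p : 'I_k) : continuous (fun v : 'rV[R]_k => v ord0 p).
Proof. exact: coord_continuous. Qed.

Lemma nrm2x_cont : continuous (fun v => nrm2 (xof v)).
Proof.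
apply: cont_sum => i; rewrite /xof.
under eq_fun do rewrite expr2.
apply: cont_mul; exact: coord_cont.
Qed.

Lemma nrm2y_cont : continuous (fun v => nrm2 (yof v)).
Proof.
apply: cont_sum => i; rewrite /yof.
under eq_fun do rewrite expr2.
apply: cont_mul; exact: coord_cont.
Qed.

Lemma F_cont : continuous (fun v => fq A (xof v) (yof v)).
Proof.
apply: cont_sum => i1; apply: cont_sum => j1; apply: cont_sum => i2; apply: cont_sum => j2.
rewrite /xof /yof.
repeat apply: cont_mul; (exact: cst_continuous || exact: coord_cont).
Qed.


Definition SS := [set v : 'rV[R]_(m + n) | nrm2 (xof v) = 1 /\ nrm2 (yof v) = 1].

Lemma coord_le1 k (x : 'I_k -> R) p : nrm2 x = 1 -> -1 <= x p <= 1.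
Proof.
move=> h.
have : x p ^+ 2 <= 1.
  rewrite -h /nrm2 (bigD1 p) //= lerDl; apply: sumr_ge0 => q _; exact: sqr_ge0.
move=> hp; apply/andP; split; nra.
Qed.

Lemma SS_closed : closed SS.
Proof.
have -> : SS = (fun v => nrm2 (xof v)) @^-1` [set 1] `&` (fun v => nrm2 (yof v)) @^-1` [set 1].
  by apply/seteqP; split => v.
apply: closedI; apply: preimage_closed.
- by move=> v _; exact: nrm2x_cont.
- exact: closed_eq.
- by move=> v _; exact: nrm2y_cont.
- exact: closed_eq.
Qed.

Lemma SS_compact : compact SS.
Proof.
have hB := @rV_compact R (m + n) (fun _ => `[-1, 1]%classic) (fun _ => @segment_compact R (-1) 1).
apply: (subclosed_compact SS_closed hB).
move=> v [hx hy] k /=; rewrite -(splitK k); case: (fintype.split k) => p /=.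
  by rewrite in_itv /=; exact: (coord_le1 p hx).
by rewrite in_itv /=; exact: (coord_le1 p hy).
Qed.


Lemma nrm2_ev k (i : 'I_k) : nrm2 (ev R i) = 1.
Proof.
rewrite /nrm2; under eq_bigr do rewrite expr2.
by rewrite (sum_delta i (ev R i)) /ev eqxx.
Qed.

Lemma exists_max (i0 : 'I_m) (j0 : 'I_n) : exists x0 y0,
  nrm2 x0 = 1 /\ nrm2 y0 = 1 /\
  forall x y, nrm2 x = 1 -> nrm2 y = 1 -> fq A x y <= fq A x0 y0.
Proof.
have ne : SS !=set0.
  by exists (mkv (ev R i0) (ev R j0)); rewrite /SS /= xof_mkv yof_mkv !nrm2_ev.
have [c cS cmax] := EVT_max_rV ne SS_compact (continuous_subspaceT F_cont).
move: (cS); rewrite inE => -[hx hy].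
exists (xof c), (yof c); split; first exact: hx; split; first exact: hy.
move=> x y nx ny.
have := cmax (mkv x y); rewrite xof_mkv yof_mkv; apply.
by rewrite inE /SS /= xof_mkv yof_mkv.
Qed.

End Topo.


Lemma gvec_ge0 (R : realType) m n (A : biquad R m n) x y i :
  nonneg_bq A -> (forall p, 0 <= x p) -> (forall q, 0 <= y q) -> 0 <= gvec A x y i.
Proof.
move=> nA hx hy; rewrite /gvec; apply: mulr_ge0; first by rewrite invr_ge0.
by apply: addr_ge0; do 3 (apply: sumr_ge0 => ? _); rewrite !mulr_ge0.
Qed.

Lemma hvec_ge0 (R : realType) m n (A : biquad R m n) x y j :
  nonneg_bq A -> (forall p, 0 <= x p) -> (forall q, 0 <= y q) -> 0 <= hvec A x y j.
Proof.
move=> nA hx hy; rewrite /hvec; apply: mulr_ge0; first by rewrite invr_ge0.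
by apply: addr_ge0; do 3 (apply: sumr_ge0 => ? _); rewrite !mulr_ge0.
Qed.

Theorem theorem5p1 (R : realType) (m n : nat) (A : biquad R m n) :
  (2 <= m)%N -> (2 <= n)%N -> nonneg_bq A ->
  rho_star A = lambda_max A /\ lambda_max A = rho_M A /\
  (exists (x : 'I_m -> R) (y : 'I_n -> R),
      Splus x /\ Splus y /\ vfun A x y = rho_star A).
Proof.
move=> hm hn nA.
have i0 : 'I_m := Ordinal (leq_trans (isT : (0 < 2)%N) hm).
have j0 : 'I_n := Ordinal (leq_trans (isT : (0 < 2)%N) hn).
have [x0 [y0 [nx0 [ny0 hmax]]]] := exists_max A i0 j0.
set lam := fq A x0 y0.
set x1 := absf x0; set y1 := absf y0.
have nx1 : nrm2 x1 = 1 by rewrite nrm2_abs.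
have ny1 : nrm2 y1 = 1 by rewrite nrm2_abs.
have hl1 : fq A x1 y1 = lam.
  apply/le_anti/andP; split; first exact: hmax.
  exact: le_trans (ler_norm _) (fq_abs x0 y0 nA).
have hom := homog hmax.
have gx := stat_x hom nx1 ny1 hl1.
have gy := stat_y hom nx1 ny1 hl1.
have eig_lam : is_M_eigenvalue A lam by exists x1, y1.
have eig_bd : forall mu, is_M_eigenvalue A mu -> `|mu| <= lam.
  move=> mu [x [y [hx [hy [hg hh]]]]].
  have -> : mu = fq A x y.
    rewrite -euler_g; under eq_bigr do rewrite hg.
    rewrite -[LHS]mulr1 -hx mulr_sumr; apply: eq_bigr => i _; ring.
  apply: le_trans (fq_abs x y nA) _; apply: hmax; rewrite nrm2_abs; [exact: hx | exact: hy].
have lam0 : 0 <= lam by have := eig_bd _ eig_lam; apply: le_trans.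
have x1ge0 : forall p, 0 <= x1 p by move=> p; exact: normr_ge0.
have y1ge0 : forall q, 0 <= y1 q by move=> q; exact: normr_ge0.
have LM : lambda_max A = lam.
  apply/le_anti/andP; split.
    apply: ge_sup; first by exists lam.
    by move=> mu /eig_bd; apply: le_trans; exact: ler_norm.
  apply: sup_upper_bound => //; split; first by exists lam.
  by exists lam => mu /eig_bd; apply: le_trans; exact: ler_norm.
have RM : rho_M A = lam.
  apply/le_anti/andP; split.
    apply: ge_sup; first by exists `|lam|, lam.
    by move=> r [mu /eig_bd h <-].
  apply: sup_upper_bound => //; first split.
  - by exists `|lam|, lam.
  - by exists lam => r [mu /eig_bd h <-].
  - by exists lam => //; rewrite ger0_norm.
have V1 : vfun A x1 y1 = lam.
  rewrite /vfun.
  have [i hi] : exists i, 0 < x1 i.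
    case: (pselect (exists i, 0 < x1 i)) => [//|H]; exfalso.
    have : nrm2 x1 = 0.
      rewrite /nrm2 big1 // => i _.
      have : ~~ (0 < x1 i) by apply/negP => hi; apply: H; exists i.
      rewrite lt_def negb_and (x1ge0 i) orbF negbK => /eqP ->.
      by rewrite expr0n.
    by rewrite nx1 => /eqP; rewrite oner_eq0.
  rewrite -[RHS](inf1 lam); congr inf; apply/seteqP; split => r /=.
    case=> [[p [hp ->]] | [q [hq ->]]].
      by rewrite gx mulfK // gt_eqF.
    by rewrite gy mulfK // gt_eqF.
  move=> ->; left; exists i; split => //.
  by rewrite gx mulfK // gt_eqF.
have Vbd : forall x y, Splus x -> Splus y -> vfun A x y <= lam.
  move=> x y [hx0 hx1] [hy0 hy1].
  apply: le_trans (hmax x y hx1 hy1).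
  rewrite -(euler_g A x y) /vfun.
  set W := [set r | _].
  have lbW : lbound W 0.
    move=> r [[p [hp ->]] | [q [hq ->]]].
      by apply: divr_ge0; [apply: gvec_ge0 | exact: ltW].
    by apply: divr_ge0; [apply: hvec_ge0 | exact: ltW].
  have hinf := ge_inf (ex_intro _ 0 lbW).
  rewrite -[X in X <= _]mulr1 -hx1 mulr_sumr; apply: ler_sum => i _.
  have [xi0|xi0] := eqVneq (x i) 0; first by rewrite xi0 expr0n mulr0 mul0r.
  have xp : 0 < x i by rewrite lt_def xi0 hx0.
  have := hinf (gvec A x y i / x i) (or_introl (ex_intro _ i (conj xp erefl))).
  move=> h.
  have -> : x i * gvec A x y i = (gvec A x y i / x i) * x i ^+ 2 by field.
  by apply: ler_wpM2r; rewrite ?sqr_ge0.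
have Sx1 : Splus x1 by split.
have Sy1 : Splus y1 by split.
have RS : rho_star A = lam.
  apply/le_anti/andP; split.
    apply: ge_sup; first by exists (vfun A x1 y1), x1, y1.
    by move=> r [x [y [hx [hy ->]]]]; exact: Vbd.
  apply: sup_upper_bound => //; first split.
  - by exists (vfun A x1 y1), x1, y1.
  - by exists lam => r [x [y [hx [hy ->]]]]; exact: Vbd.
  - by exists x1, y1; rewrite V1.
split; first by rewrite RS LM.
split; first by rewrite LM RM.
by exists x1, y1; rewrite RS V1.
Qed.
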